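(* Let $(S, +)$ be a commutative semigroup, let $p$ be an idempotent in $(\beta S, +)$, and let $\langle C_n \rangle_{n=1}^\infty$ be a sequence of members of $p$. Then for each $i \in \mathbb{N}$ there exists a sequence $\langle x_{i, j}\rangle_{j=1}^\infty$ in $S$ with $\mathrm{FS}(\langle x_{i, j}\rangle_{j=1}^\infty) \subseteq C_i$, such that for every nonempty finite $F \subseteq \mathbb{N}$, $\sum_{i \in F} \langle x_{i, j}\rangle_{j=1}^\infty \subseteq C_{\min F}$, i.e. $\sum_{i\in F} x_{i,j_i} \in C_{\min F}$ for every choice of $j_i\in\mathbb{N}$ ($i\in F$).
   Context: $\beta S$ is the set of ultrafilters on the discrete semigroup $S$, with the extension of the operation $p+q = \{A \subseteq S : \{x \in S: -x+A \in q\} \in p\}$, where $-x+A=\{y\in S: x+y\in A\}$; $p$ is idempotent if $p+p=p$. For a sequence $\langle x_n\rangle_{n=1}^\infty$, $\mathrm{FS}(\langle x_n\rangle_{n=1}^\infty)=\{\sum_{n\in H}x_n : H \text{ a nonempty finite subset of } \mathbb{N}\}$. For finite $F\subseteq\mathbb{N}$ and sequences $Y_i$, $\sum_{i\in F} Y_i$ is the set of sums $\sum_{i\in F} a_i$ where $a_i$ is a term of $Y_i$. *)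

(* Defs.v *)
From mathcomp Require Import all_boot.
Set Implicit Arguments. Unset Strict Implicit. Unset Printing Implicit Defensive.

Definition is_ultrafilter (S : Type) (p : (S -> Prop) -> Prop) : Prop :=
  [/\ p (fun _ => True),
      ~ p (fun _ => False),
      (forall A B : S -> Prop, p A -> (forall x, A x -> B x) -> p B),
      (forall A B : S -> Prop, p A -> p B -> p (fun x => A x /\ B x))
    & (forall A : S -> Prop, p A \/ p (fun x => ~ A x))].

Definition left_translate (S : Type) (op : S -> S -> S) (x : S) (A : S -> Prop)
  : S -> Prop := fun y => A (op x y).

Definition ultra_add (S : Type) (op : S -> S -> S) (p q : (S -> Prop) -> Prop)
  : (S -> Prop) -> Prop :=
  fun A => p (fun x => q (left_translate op x A)).

Definition ultra_idempotent (S : Type) (op : S -> S -> S) (p : (S -> Prop) -> Prop)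
  : Prop := forall A : S -> Prop, ultra_add op p p A <-> p A.

Definition nelist_sum (S : Type) (op : S -> S -> S) (x : nat -> S) (h : nat) (t : seq nat) : S :=
  foldl (fun acc i => op acc (x i)) (x h) t.

(* FS(<x_n>) : sums over nonempty finite index sets H, represented as
   duplicate-free nonempty lists (the order is irrelevant as op is
   associative and commutative). *)
Definition FS (S : Type) (op : S -> S -> S) (x : nat -> S) : S -> Prop :=
  fun y => exists (h : nat) (t : seq nat), uniq (h :: t) /\ y = nelist_sum op x h t.

(* Main.v *)
Require Import Defs.
From mathcomp Require Import all_boot zify.
From Stdlib Require Import ClassicalEpsilon Classical.
Set Implicit Arguments. Unset Strict Implicit. Unset Printing Implicit Defensive.

Definition sig2 (i j : nat) := 2 ^ i * j.*2.+1.
Lemma logn_sig2 i j : logn 2 (sig2 i j) = i.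
Proof.
rewrite /sig2 lognM ?expn_gt0 // pfactorK //.
rewrite -[j.*2.+1]muln1 logn_Gauss ?logn1 ?addn0 //.
by rewrite coprime_sym coprimen2 /= odd_double.
Qed.
Lemma sig2_inj i j i' j' : sig2 i j = sig2 i' j' -> i = i' /\ j = j'.
Proof.
move=> e; have ei : i = i' by rewrite -(logn_sig2 i j) e logn_sig2.
subst i'; split=> //; move: e; rewrite /sig2 => /eqP.
rewrite eqn_pmul2l ?expn_gt0 //; lia.
Qed.
Lemma sig2_ge i j : i <= sig2 i j.
Proof.
rewrite /sig2; apply: leq_trans (ltnW (ltn_expl i (isT : 1 < 2))) _.
by rewrite leq_pmulr.
Qed.

Definition star (S : Type) (op : S -> S -> S) (p : (S -> Prop) -> Prop) (A : S -> Prop)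
  : S -> Prop := fun x => A x /\ p (left_translate op x A).
Definition Dset (S : Type) (C : nat -> S -> Prop) (k : nat) : S -> Prop :=
  fun z => forall i, i <= k -> C i z.
Fixpoint Bs (S : Type) (op : S -> S -> S) (p : (S -> Prop) -> Prop)
  (C : nat -> S -> Prop) (inh : inhabited S) (n : nat) : S -> Prop :=
  match n with
  | 0 => star op p (Dset C 0)
  | n'.+1 => let B := Bs op p C inh n' in
      star op p (fun z => B z /\ B (op (epsilon inh B) z) /\ Dset C n'.+1 z)
  end.

Lemma uf_mono S (p : (S -> Prop) -> Prop) : is_ultrafilter p ->
  forall A B : S -> Prop, p A -> (forall x, A x -> B x) -> p B.
Proof. by case. Qed.
Lemma uf_inter S (p : (S -> Prop) -> Prop) : is_ultrafilter p ->
  forall A B : S -> Prop, p A -> p B -> p (fun x => A x /\ B x).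
Proof. by case. Qed.
Lemma uf_ne S (p : (S -> Prop) -> Prop) : is_ultrafilter p ->
  forall A : S -> Prop, p A -> exists x, A x.
Proof.
move=> pu A pA; case: (classic (exists x, A x)) => // nx.
case: pu => _ pF mono _ _; exfalso; apply: pF; apply: (mono _ _ pA) => x Ax.
by apply: nx; exists x.
Qed.

Lemma star_in S op (p : (S -> Prop) -> Prop) (opA : forall a b c : S, op a (op b c) = op (op a b) c) :
  is_ultrafilter p -> ultra_idempotent op p ->
  forall A, p A -> p (star op p A) /\ (forall x, star op p A x -> p (left_translate op x (star op p A))).
Proof.
move=> pu pid.
have key : forall A, p A -> p (star op p A).
  move=> A pA; apply: (uf_inter pu) => //; exact/pid.
move=> A pA; split; first exact: key.
move=> x [Ax px]; have := key _ px; move=> kk.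
apply: (uf_mono pu kk).
move=> z [Az pz]; split; first exact: Az.
apply: (uf_mono pu pz) => w; rewrite /left_translate opA //.
Qed.

Lemma Dset_in S (p : (S -> Prop) -> Prop) (C : nat -> S -> Prop) :
  is_ultrafilter p -> (forall n, p (C n)) -> forall k, p (Dset C k).
Proof.
move=> pu Cp; elim=> [|k IH].
  apply: (uf_mono pu (Cp 0)) => z Cz i; rewrite leqn0 => /eqP ->; exact Cz.
apply: (uf_mono pu (uf_inter pu IH (Cp k.+1))) => z [Dz Cz] i.
rewrite leq_eqVlt => /orP [/eqP -> //|]; rewrite ltnS; exact: Dz.
Qed.

Lemma Bs_props S op (p : (S -> Prop) -> Prop) (C : nat -> S -> Prop) inh
  (opA : forall a b c : S, op a (op b c) = op (op a b) c) :
  is_ultrafilter p -> ultra_idempotent op p -> (forall n, p (C n)) ->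
  forall n, p (Bs op p C inh n) /\
    (forall x, Bs op p C inh n x -> p (left_translate op x (Bs op p C inh n))).
Proof.
move=> pu pid Cp; elim=> [|n [pB sB]] /=.
  exact: (star_in opA pu pid (Dset_in pu Cp 0)).
apply: (star_in opA pu pid).
have yB : Bs op p C inh n (epsilon inh (Bs op p C inh n)).
  by apply: epsilon_spec; exact: (uf_ne pu pB).
apply: (uf_inter pu pB); apply: (uf_inter pu (sB _ yB)); exact: Dset_in.
Qed.

Lemma Bs_y S op (p : (S -> Prop) -> Prop) (C : nat -> S -> Prop) inh
  (opA : forall a b c : S, op a (op b c) = op (op a b) c) :
  is_ultrafilter p -> ultra_idempotent op p -> (forall n, p (C n)) ->
  forall n, Bs op p C inh n (epsilon inh (Bs op p C inh n)).
Proof.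
move=> pu pid Cp n; apply: epsilon_spec; apply: (uf_ne pu).
by case: (Bs_props inh opA pu pid Cp n).
Qed.

Lemma Bs_step S op (p : (S -> Prop) -> Prop) (C : nat -> S -> Prop) inh n z :
  Bs op p C inh n.+1 z ->
  Bs op p C inh n z /\ Bs op p C inh n (op (epsilon inh (Bs op p C inh n)) z).
Proof. by case=> [[? [? ?]] _]. Qed.

Lemma Bs_D S op (p : (S -> Prop) -> Prop) (C : nat -> S -> Prop) inh n z :
  Bs op p C inh n z -> Dset C n z.
Proof. by case: n => [[]|n [[? [? ?]] _]]. Qed.

Lemma Bs_mono S op (p : (S -> Prop) -> Prop) (C : nat -> S -> Prop) inh k n z :
  k <= n -> Bs op p C inh n z -> Bs op p C inh k z.
Proof.
move=> kn; elim: n kn z => [|n IH] kn z; first by rewrite leqn0 in kn; move/eqP: kn => ->.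
rewrite leq_eqVlt in kn; case/orP: kn => [/eqP -> //|]; rewrite ltnS => kn Bz.
exact: (IH kn _ (Bs_step Bz).1).
Qed.

Lemma nelist_osum S (op : S -> S -> S) (opA : associative op) (opC : commutative op)
  (F : nat -> S) h t :
  Some (nelist_sum op F h t) = \big[oAC opA opC/None]_(i <- h :: t) Some (F i).
Proof.
rewrite big_cons /nelist_sum.
elim: t (F h) => [|a t IH] acc; first by rewrite big_nil.
by rewrite /= IH big_cons Monoid.mulmA.
Qed.

Lemma main_sum S op (p : (S -> Prop) -> Prop) (C : nat -> S -> Prop) inh
  (opA : associative op) (opC : commutative op) :
  is_ultrafilter p -> ultra_idempotent op p -> (forall n, p (C n)) ->
  forall d k (L : seq nat), uniq L -> L != [::] -> (forall i, i \in L -> k <= i < k + d) ->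
  exists z, \big[oAC opA opC/None]_(i <- L) Some (epsilon inh (Bs op p C inh i)) = Some z
            /\ Bs op p C inh k z.
Proof.
move=> pu pid Cp; elim=> [|d IH] k L uL nL hL.
  by case: L nL hL uL => // a L _ /(_ a (mem_head _ _)); lia.
have [kL|kL] := boolP (k \in L).
  rewrite (perm_big _ (perm_to_rem kL)) big_cons.
  have urem : uniq (rem k L) by exact: rem_uniq.
  have [->|nr] := eqVneq (rem k L) [::].
    rewrite big_nil; exists (epsilon inh (Bs op p C inh k)); split => //.
    exact: (Bs_y inh opA pu pid Cp).
  have hr : forall i, i \in rem k L -> k.+1 <= i < k.+1 + d.
    move=> i ir; have iL : i \in L by exact: (mem_rem ir).
    have ik : i != k.
      apply/eqP => e; move: ir; rewrite e (mem_rem_uniq _ uL) inE eqxx //.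
    by move: (hL i iL) ik; lia.
  have [z [ez Bz]] := IH k.+1 _ urem nr hr.
  rewrite ez; eexists; split; first by [].
  exact: (Bs_step Bz).2.
have hr : forall i, i \in L -> k.+1 <= i < k.+1 + d.
  move=> i iL; have ik : i != k by apply/eqP => e; rewrite -e iL in kL.
  by move: (hL i iL) ik; lia.
have [z [ez Bz]] := IH k.+1 _ uL nL hr.
exists z; split => //; exact: (Bs_mono (leqnSn k) Bz).
Qed.

Lemma le_sumn (L : seq nat) i : i \in L -> i <= sumn L.
Proof.
elim: L => // a L IH; rewrite inE => /orP [/eqP -> /=|/IH]; first exact: leq_addr.
move=> h /=; exact: leq_trans h (leq_addl _ _).
Qed.

Theorem theorem2p5 (S : Type) (op : S -> S -> S)
  (opA : forall a b c : S, op a (op b c) = op (op a b) c)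
  (opC : forall a b : S, op a b = op b a)
  (p : (S -> Prop) -> Prop)
  (p_ultra : is_ultrafilter p)
  (p_idem : ultra_idempotent op p)
  (C : nat -> (S -> Prop))
  (C_in_p : forall n, p (C n)) :
  exists x : nat -> nat -> S,
    (forall i y, FS op (x i) y -> C i y) /\
    (forall (h : nat) (t : seq nat), uniq (h :: t) ->
       forall m : nat, m \in h :: t -> (forall k, k \in h :: t -> m <= k) ->
       forall j : nat -> nat,
         C m (nelist_sum op (fun i => x i (j i)) h t)).
Proof.
have inh : inhabited S.
  have [s _] := uf_ne p_ultra (let: And5 a _ _ _ _ := p_ultra in a).
  exact: inhabits s.
pose Y n := epsilon inh (Bs op p C inh n).
have key : forall k L, uniq L -> L != [::] -> (forall i, i \in L -> k <= i) ->
    exists z, \big[oAC opA opC/None]_(i <- L) Some (Y i) = Some z /\ C k z.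
  move=> k L uL nL hL.
  have hb : forall i, i \in L -> k <= i < k + (sumn L).+1.
    move=> i iL; apply/andP; split; first exact: hL.
    by have := le_sumn iL; lia.
  have [z [ez Bz]] := @main_sum _ _ _ _ inh opA opC p_ultra p_idem C_in_p (sumn L).+1 k L uL nL hb.
  exists z; split; first exact: ez.
  exact: (Bs_D Bz).
exists (fun i j => Y (sig2 i j)); split.
  move=> i y [h [t [u ->]]].
  have := nelist_osum opA opC (fun j => Y (sig2 i j)) h t.
  rewrite -(big_map (sig2 i) xpredT (fun n => Some (Y n))).
  have inj : injective (sig2 i) by move=> a b /sig2_inj [].
  have [z [ez Cz]] := key i (map (sig2 i) (h :: t)) ltac:(by rewrite map_inj_uniq) isT
    ltac:(move=> n /mapP [a _ ->]; exact: sig2_ge).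
  by rewrite ez => -[->].
move=> h t u m mL hm j.
have := nelist_osum opA opC (fun i => Y (sig2 i (j i))) h t.
rewrite -(big_map (fun i => sig2 i (j i)) xpredT (fun n => Some (Y n))).
have inj : injective (fun i => sig2 i (j i)) by move=> a b /sig2_inj [].
have [z [ez Cz]] := key m (map (fun i => sig2 i (j i)) (h :: t))
    ltac:(by rewrite map_inj_uniq) isT
    ltac:(move=> n /mapP [a aL ->]; exact: leq_trans (hm a aL) (sig2_ge _ _)).
by rewrite ez => -[->].
Qed.
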